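(* Let $(A_n)_{n\in\mathbb Z^+}$ be a sequence of invertible linear operators on $\mathbb R^d$ that admits a strong exponential dichotomy with respect to a sequence of norms $\|\cdot\|_n$, $n\in\mathbb Z^+$, and projections $P_n$, $n\in\mathbb Z^+$. Let $Y\subset\mathbb R^d$ be any subspace with $\mathbb R^d=\operatorname{Im}P_0\oplus Y$, let $P_0'$ be the projection onto $\operatorname{Im}P_0$ along $Y$, and set $P'_n=\mathcal A(n,0)P'_0\mathcal A(0,n)$ for $n\in\mathbb Z^+$. Then $(A_n)_{n\in\mathbb Z^+}$ admits a strong exponential dichotomy with respect to the norms $\|\cdot\|_n$ and projections $P'_n$, $n\in\mathbb Z^+$.
   Context: $\mathbb Z^+=\{0,1,\dots\}$. $\mathcal A(m,n)=A_{m-1}\cdots A_n$ ($m>n$), $\mathrm{Id}$ ($m=n$), $A_m^{-1}\cdots A_{n-1}^{-1}$ ($m<n$). Strong exponential dichotomy w.r.t. norms $\{\|\cdot\|_n\}$ and projections $P_n$: $A_nP_n=P_{n+1}A_n$ for all $n$, and there exist $K>0$, $a\ge\lambda>0$ with, for $m\ge n$, $x\in\mathbb R^d$, $Q_m=\mathrm{Id}-P_m$: $\|\mathcal A(m,n)P_nx\|_m\le Ke^{-\lambda(m-n)}\|x\|_n$, $\|\mathcal A(n,m)Q_mx\|_n\le Ke^{-\lambda(m-n)}\|x\|_m$, $\|\mathcal A(m,n)x\|_m\le Ke^{a(m-n)}\|x\|_n$, $\|\mathcal A(n,m)x\|_n\le Ke^{a(m-n)}\|x\|_m$. *)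

(* Defs.v *)
From HB Require Import structures.
From mathcomp Require Import all_boot all_order all_algebra.
From mathcomp Require Import reals sequences exp.
Set Implicit Arguments. Unset Strict Implicit. Unset Printing Implicit Defensive.
Import Order.TTheory GRing.Theory Num.Theory.
Local Open Scope ring_scope.

Section Defs.
Variables (R : realType) (d : nat).

Fixpoint fwd (A : nat -> 'M[R]_d) (n k : nat) : 'M[R]_d :=
  match k with 0 => 1%:M | k'.+1 => A (n + k')%N *m fwd A n k' end.

Fixpoint bwd (A : nat -> 'M[R]_d) (m k : nat) : 'M[R]_d :=
  match k with 0 => 1%:M | k'.+1 => bwd A m k' *m invmx (A (m + k')%N) end.

Definition cocycle (A : nat -> 'M[R]_d) (m n : nat) : 'M[R]_d :=
  if (n <= m)%N then fwd A n (m - n) else bwd A m (n - m).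

Definition is_norm (N : 'cV[R]_d -> R) : Prop :=
  [/\ forall x, 0 <= N x,
      forall x, N x = 0 -> x = 0,
      forall (c : R) x, N (c *: x) = `|c| * N x
    & forall x y, N (x + y) <= N x + N y].

Definition strong_exp_dichotomy (A : nat -> 'M[R]_d)
    (N : nat -> 'cV[R]_d -> R) (P : nat -> 'M[R]_d) : Prop :=
  (forall n, P n *m P n = P n) /\
  (forall n, A n *m P n = P n.+1 *m A n) /\
  exists K a lam : R, [/\ 0 < K, 0 < lam, lam <= a &
    forall (m n : nat) (x : 'cV[R]_d), (n <= m)%N ->
      [/\ N m (cocycle A m n *m (P n *m x))
            <= K * expR (- (lam * (m - n)%:R)) * N n x,
          N n (cocycle A n m *m ((1%:M - P m) *m x))
            <= K * expR (- (lam * (m - n)%:R)) * N m x,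
          N m (cocycle A m n *m x) <= K * expR (a * (m - n)%:R) * N n x
        & N n (cocycle A n m *m x) <= K * expR (a * (m - n)%:R) * N m x]].

Definition in_im (M : 'M[R]_d) (x : 'cV[R]_d) : Prop := exists y, x = M *m y.

Definition is_subspace (Y : 'cV[R]_d -> Prop) : Prop :=
  [/\ Y 0, forall x y, Y x -> Y y -> Y (x + y) & forall (c : R) x, Y x -> Y (c *: x)].

Definition direct_sum_im (M : 'M[R]_d) (Y : 'cV[R]_d -> Prop) : Prop :=
  (forall x, exists u v, [/\ in_im M u, Y v & x = u + v]) /\
  (forall x, in_im M x -> Y x -> x = 0).

Definition proj_onto_along (Q M : 'M[R]_d) (Y : 'cV[R]_d -> Prop) : Prop :=
  forall u v, in_im M u -> Y v -> Q *m (u + v) = u.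

End Defs.

(* Main.v *)
Require Import Defs.
From HB Require Import structures.
From mathcomp Require Import all_boot all_order all_algebra.
From mathcomp Require Import reals sequences exp.
From mathcomp Require Import all_classical all_reals all_analysis.
From mathcomp Require Import ring lra.
Import Order.TTheory GRing.Theory Num.Theory.
Import numFieldNormedType.Exports.
Local Open Scope classical_set_scope.
Local Open Scope ring_scope.

Section Fin.
Variables (R : realType) (d : nat) (N : 'cV[R]_d -> R).
Hypothesis hN : is_norm N.

Lemma N0 : N 0 = 0.
Proof. case: hN => _ _ hZ _. by rewrite -(scale0r (0 : 'cV[R]_d)) hZ normr0 mul0r. Qed.

Lemma N_ge0 x : 0 <= N x.
Proof. by case: hN. Qed.

Lemma N_sum (I : Type) (r : seq I) (f : I -> 'cV[R]_d) :
  N (\sum_(i <- r) f i) <= \sum_(i <- r) N (f i).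
Proof.
case: hN => _ _ _ hT.
elim: r => [|i r IH]; first by rewrite !big_nil N0.
rewrite !big_cons. have := hT (f i) (\sum_(j <- r) f j). move=> h. apply: le_trans h _. by rewrite lerD2l.
Qed.

Lemma N_upper (M : 'M[R]_d) (x : 'cV[R]_d) (c : R) :
  (forall i, `|x i 0| <= c) ->
  N (M *m x) <= (\sum_j N (M *m delta_mx j 0)) * c.
Proof.
case: hN => _ _ hZ _ hc.
have -> : x = \sum_j x j 0 *: delta_mx j 0.
  rewrite {1}[x]matrix_sum_delta; apply: eq_bigr => j _.
  by rewrite big_ord1.
rewrite mulmx_sumr; apply: le_trans (N_sum _ _ _) _.
rewrite mulr_suml; apply: ler_sum => j _.
rewrite -scalemxAr hZ mulrC; apply: ler_wpM2l; first exact: N_ge0.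
exact: hc.
Qed.

Lemma entry_le m n (x : 'M[R]_(m,n)) i j : `|x i j| <= `|x|.
Proof.
rewrite (_ : `|x| = mx_norm x) // mx_normrE; apply/bigmax_geP; right => /=.
by exists (i, j).
Qed.


Lemma N_opp x : N (- x) = N x.
Proof. case: hN => _ _ hZ _. by rewrite -scaleN1r hZ normrN normr1 mul1r. Qed.

Lemma N_dist x y : `|N x - N y| <= N (x - y).
Proof.
case: hN => _ _ _ hT.
rewrite ler_norml; apply/andP; split.
  have := hT (y - x) x; rewrite subrK -opprB N_opp => h.
  by lra.
have := hT (x - y) y; rewrite subrK => h.
by lra.
Qed.

Let B := \sum_j N (1%:M *m (delta_mx j 0 : 'cV[R]_d)).

Lemma B_ge0 : 0 <= B.
Proof. by apply: sumr_ge0 => j _; exact: N_ge0. Qed.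

Lemma N_upT (v : 'rV[R]_d) : N (v^T) <= B * `|v|.
Proof.
rewrite -[v^T]mul1mx; apply: N_upper => i.
by rewrite mxE; exact: entry_le.
Qed.

Lemma g_cont : continuous (fun v : 'rV[R]_d => N (v^T)).
Proof.
move=> v; apply/(cvgrPdist_lt (FF := nbhs_filter v)) => e e0.
have eB : 0 < e / (B + 1) by rewrite divr_gt0 // ltr_wpDl // B_ge0.
near=> w.
have : ball v (e / (B + 1)) w by near: w; exact: (@near_ball R _ v _ eB).
rewrite -ball_normE /= => vw.
apply: le_lt_trans (N_dist _ _) _.
rewrite -linearB /=.
apply: le_lt_trans (N_upT _) _.
apply: (@le_lt_trans _ _ (B * (e / (B + 1)))).
  by apply: ler_wpM2l; [exact: B_ge0| exact: ltW].
rewrite mulrA ltr_pdivrMr ?ltr_wpDl ?B_ge0 //.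
by rewrite mulrC ltr_pM2l // ltrDl.
Unshelve. all: by end_near.
Qed.

Lemma N_lower : exists c, 0 < c /\ forall x : 'cV[R]_d, c * `|x^T| <= N x.
Proof.
case: hN => _ hN0 hZ _.
case: d N hN hN0 hZ B g_cont N_upT => [|k] N' hN' hN0' hZ' B' gc upT.
  exists 1; split => // x.
  rewrite (thinmx0 x^T) normr0 mulr0.
  by case: hN'.
pose S := [set v : 'rV[R]_k.+1 | `|v| = 1].
have S0 : S !=set0.
  pose w : 'rV[R]_k.+1 := delta_mx 0 0.
  have w0 : w != 0.
    apply/eqP => /matrixP /(_ 0 0); rewrite !mxE /= => /eqP.
    by rewrite oner_eq0.
  exists (`|w|^-1 *: w); rewrite /S /= normrZ normfV normr_id mulVf //.
  by rewrite normr_eq0.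
have cS : compact S.
  apply: bounded_closed_compact.
    exists 1; split => // M M1 x; rewrite /S /= => ->; exact: ltW.
  apply: (@preimage_closed _ _ (fun v : 'rV[R]_k.+1 => `|v|) [set 1%R]).
    by move=> x _; exact: norm_continuous.
  exact: closed_eq.
have [v0 v0S hmin] := compact_EVT_min S0 cS (continuous_subspaceT gc).
have nv0 : `|v0| = 1 by move: v0S; rewrite inE.
have c0 : 0 < N' v0^T.
  rewrite lt_def; apply/andP; split; last by case: hN'.
  apply/eqP => /hN0' /(congr1 trmx); rewrite trmxK trmx0 => v00.
  by move: nv0; rewrite v00 normr0 => /eqP; rewrite eq_sym oner_eq0.
exists (N' v0^T); split => // x.
have [->|xn0] := eqVneq x^T 0.
  by rewrite normr0 mulr0; case: hN'.
have nx : 0 < `|x^T| by rewrite normr_gt0.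
have := hmin (`|x^T|^-1 *: x^T).
rewrite inE /S /= normrZ normfV normr_id mulVf ?gt_eqF // => /(_ erefl).
rewrite linearZ /= trmxK hZ' normfV normr_id => h.
by rewrite -ler_pdivlMr // mulrC.
Qed.

Lemma N_lin (M : 'M[R]_d) : exists C, 0 <= C /\ forall x, N (M *m x) <= C * N x.
Proof.
have [c [c0 hc]] := N_lower.
pose BM := \sum_j N (M *m (delta_mx j 0 : 'cV[R]_d)).
have BM0 : 0 <= BM by apply: sumr_ge0 => j _; exact: N_ge0.
exists (BM / c); split; first by rewrite divr_ge0 // ltW.
move=> x.
have h : forall i, `|x i 0| <= `|x^T|.
  by move=> i; have := entry_le _ _ x^T 0 i; rewrite mxE.
apply: le_trans (N_upper M x _ h) _.
by rewrite -mulrA ler_wpM2l // ler_pdivlMl.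
Qed.

End Fin.
Lemma invmxM' (R : comUnitRingType) d (a b : 'M[R]_d) :
  a \in unitmx -> b \in unitmx -> invmx (a *m b) = invmx b *m invmx a.
Proof.
move=> ua ub.
have ab : a *m b \in unitmx by rewrite unitmx_mul ua ub.
have H : invmx b *m invmx a *m (a *m b) = 1%:M.
  by rewrite mulmxA -(mulmxA _ (invmx a)) mulVmx // mulmx1 mulVmx.
by rewrite -[RHS]mulmx1 -(mulmxV ab) mulmxA H mul1mx.
Qed.

Section Alg.
Variables (R : realType) (d : nat) (A : nat -> 'M[R]_d).
Hypothesis Au : forall n, A n \in unitmx.

Let G := fwd A 0.

Lemma GS n : G n.+1 = A n *m G n.
Proof. by rewrite /G /= add0n. Qed.

Lemma Gu n : G n \in unitmx.
Proof. elim: n => [|n IH]; first by rewrite /G /= unitmx1.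
by rewrite GS unitmx_mul Au IH. Qed.

Lemma fwdE n k : fwd A n k = G (n + k) *m invmx (G n).
Proof.
elim: k => [|k IH]; first by rewrite addn0 mulmxV ?Gu.
by rewrite /= IH addnS GS mulmxA.
Qed.

Lemma bwdE m k : bwd A m k = G m *m invmx (G (m + k)).
Proof.
elim: k => [|k IH]; first by rewrite addn0 mulmxV ?Gu.
by rewrite /= IH addnS GS invmxM' ?Au ?Gu // mulmxA.
Qed.

Lemma cocycleE m n : cocycle A m n = G m *m invmx (G n).
Proof.
rewrite /cocycle; case: leqP => h.
  by rewrite fwdE subnKC.
by rewrite bwdE subnKC // ltnW.
Qed.

End Alg.

Lemma mx_colP (R : fieldType) d (M M' : 'M[R]_d) :
  (forall x : 'cV[R]_d, M *m x = M' *m x) -> M = M'.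
Proof.
move=> H; apply: trmx_inj; apply/eqP/mulmxP => u.
by rewrite -[u]trmxK -!trmx_mul H.
Qed.

Lemma invmx1' (R : comUnitRingType) d : invmx (1%:M : 'M[R]_d) = 1%:M.
Proof. by rewrite -[LHS]mul1mx mulmxV ?unitmx1. Qed.

Lemma exp_bound (R : realType) (K C lam X : R) (m n : nat) :
  0 <= K -> 0 <= C -> 0 < lam -> 0 <= X -> (n <= m)%N ->
  K * expR (- (lam * (m - n)%:R)) * X +
  K * expR (- (lam * m%:R)) * (C * (K * expR (- (lam * n%:R)) * X))
  <= (K + C * K ^+ 2) * expR (- (lam * (m - n)%:R)) * X.
Proof.
move=> K0 C0 l0 X0 nm.
set E := expR (- (lam * (m - n)%:R)).
have ab : expR (- (lam * m%:R)) * expR (- (lam * n%:R)) <= E.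
  rewrite -expRD ler_expR natrB //.
  have : 0 <= lam * n%:R by rewrite mulr_ge0 // ltW.
  lra.
have h : 0 <= C * K ^+ 2 * X by rewrite !mulr_ge0.
have -> : K * expR (- (lam * m%:R)) * (C * (K * expR (- (lam * n%:R)) * X))
  = (C * K ^+ 2 * X) * (expR (- (lam * m%:R)) * expR (- (lam * n%:R))).
  by rewrite expr2; ring.
have := ler_wpM2l h ab.
rewrite /E; set F := expR _. set u := _ * _.
move=> hu; rewrite mulrDl mulrDl lerD2l. 
rewrite /u in hu *. apply: le_trans hu _.
by rewrite -!mulrA le_eqVlt; apply/orP; left; apply/eqP; ring.
Qed.

Lemma zmod_id2 (V : zmodType) (a b c : V) : a - c = a - b - (c - b).
Proof. by rewrite opprB addrA subrK. Qed.

Section Main.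
Variables (R : realType) (d : nat) (A : nat -> 'M[R]_d)
    (N : nat -> 'cV[R]_d -> R) (P : nat -> 'M[R]_d)
    (Y : 'cV[R]_d -> Prop) (P0' : 'M[R]_d).
Hypothesis Au : forall n, A n \in unitmx.
Hypothesis Pid : forall n, P n *m P n = P n.
Hypothesis Pinv : forall n, A n *m P n = P n.+1 *m A n.
Hypothesis hY : is_subspace Y.
Hypothesis hdec : forall x, exists u v, [/\ in_im (P 0%N) u, Y v & x = u + v].
Hypothesis hP' : proj_onto_along P0' (P 0%N) Y.

Local Notation G := (fwd A 0).
Local Notation Gi n := (invmx (fwd A 0 n)).

Lemma cE m n : cocycle A m n = G m *m Gi n.
Proof. exact: cocycleE. Qed.

Lemma G0 : G 0 = 1%:M. Proof. by []. Qed.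
Lemma Gi0 : Gi 0 = 1%:M. Proof. by rewrite G0 invmx1'. Qed.

Lemma GiS n : Gi n.+1 = Gi n *m invmx (A n).
Proof. by rewrite GS invmxM' ?Au ?Gu. Qed.

Lemma PE n : P n = G n *m P 0 *m Gi n.
Proof.
elim: n => [|n IH]; first by rewrite G0 Gi0 mul1mx mulmx1.
rewrite GiS GS -[P n.+1]mulmx1 -(mulmxV (Au n)) mulmxA -Pinv IH.
by rewrite !mulmxA.
Qed.

Lemma P'P0 : P0' *m P 0 = P 0.
Proof.
apply: mx_colP => x; rewrite -mulmxA.
case: hY => Y0 _ _.
by rewrite -{1}(addr0 (P 0%N *m x)) hP' //; exists x.
Qed.

Lemma P0P' : P 0 *m P0' = P0'.
Proof.
apply: mx_colP => x; rewrite -mulmxA.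
have [u [v [[y ->] Yv ->]]] := hdec x.
by rewrite hP' ?mulmxA ?Pid //; exists y.
Qed.

Lemma P'P' : P0' *m P0' = P0'.
Proof.
apply: mx_colP => x; rewrite -mulmxA.
case: hY => Y0 _ _.
have [u [v [hu Yv ->]]] := hdec x.
by rewrite hP' // -{1}(addr0 u) hP' // addr0.
Qed.

Lemma ident1 m n (x : 'cV[R]_d) :
  cocycle A m n *m ((cocycle A n 0 *m P0' *m cocycle A 0 n) *m x) =
  cocycle A m n *m (P n *m x) +
  cocycle A m 0 *m (P 0 *m (P0' *m (cocycle A 0 n *m ((1%:M - P n) *m x)))).
Proof.
rewrite !cE G0 Gi0 !mul1mx !mulmx1 (PE n) -!mulmxA (mulKmx (@Gu R d A Au n)).
rewrite mulmxBl mul1mx -!mulmxA mulmxBr (mulKmx (@Gu R d A Au n)).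

rewrite -mulmxDr; congr (G m *m _).
rewrite !mulmxBr !mulmxA P0P' P'P0 addrCA subrr; apply/esym; apply: addr0.
Qed.

Lemma ident2 m n (x : 'cV[R]_d) :
  cocycle A n m *m ((1%:M - cocycle A m 0 *m P0' *m cocycle A 0 m) *m x) =
  cocycle A n m *m ((1%:M - P m) *m x) -
  cocycle A n 0 *m (P 0 *m (P0' *m (cocycle A 0 m *m ((1%:M - P m) *m x)))).
Proof.
rewrite !cE G0 Gi0 !mul1mx !mulmx1 (PE m) !mulmxBl !mul1mx -!mulmxA.
rewrite !mulmxBr !mulKmx ?Gu //.
rewrite -!mulmxBr; congr (G n *m _).
rewrite !mulmxBr !mulmxA P0P' P'P0; apply: zmod_id2.
Qed.

Hypothesis hN : forall n, is_norm (N n).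
Variables (K a lam : R).
Hypotheses (K0 : 0 < K) (lam0 : 0 < lam) (lama : lam <= a).
Hypothesis hb : forall (m n : nat) (x : 'cV[R]_d), (n <= m)%N ->
      [/\ N m (cocycle A m n *m (P n *m x))
            <= K * expR (- (lam * (m - n)%:R)) * N n x,
          N n (cocycle A n m *m ((1%:M - P m) *m x))
            <= K * expR (- (lam * (m - n)%:R)) * N m x,
          N m (cocycle A m n *m x) <= K * expR (a * (m - n)%:R) * N n x
        & N n (cocycle A n m *m x) <= K * expR (a * (m - n)%:R) * N m x].

Lemma final : strong_exp_dichotomy A N
    (fun n => cocycle A n 0 *m P0' *m cocycle A 0 n).
Proof.
have [C [C0 hC]] := @N_lin R d (N 0%N) (hN 0%N) P0'.
split.
  move=> n; rewrite !cE G0 Gi0 !mulmx1 !mul1mx -!mulmxA (mulKmx (@Gu R d A Au n)).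
  by rewrite !mulmxA -(mulmxA (G n) P0' P0') P'P'.
split.
  move=> n; rewrite !cE G0 Gi0 !mulmx1 !mul1mx GiS GS -!mulmxA.
  by rewrite (mulVmx (Au n)) mulmx1.
have K'0 : 0 <= C * K ^+ 2 by rewrite mulr_ge0 // exprn_ge0 // ltW.
exists (K + C * K ^+ 2), a, lam; split => //.
  by rewrite ltr_wpDr.
move=> m n x nm.
have [h1 h2 h3 h4] := hb m n x nm.
have KE : forall t, 0 <= K * expR t by move=> t; rewrite mulr_ge0 // ?expR_ge0 // ltW.
have KK : forall t X, 0 <= X -> K * expR t * X <= (K + C * K ^+ 2) * expR t * X.
  move=> t X X0; rewrite ler_wpM2r // ler_wpM2r ?expR_ge0 //.
  by rewrite lerDl.
have Nge0 : forall k y, 0 <= N k y by move=> k y; case: (hN k).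
have Nopp : forall k y, N k (- y) = N k y.
  move=> k y; case: (hN k) => _ _ hZ _.
  by rewrite -scaleN1r hZ normrN normr1 mul1r.
split.
- rewrite ident1 //.
  case: (hN m) => _ _ _ hT; apply: le_trans (hT _ _) _.
  have [g1 _ _ _] := hb m 0 (P0' *m (cocycle A 0 n *m ((1%:M - P n) *m x))) (leq0n m).
  have [_ g2 _ _] := hb n 0 x (leq0n n).
  rewrite subn0 in g1; rewrite subn0 in g2.
  apply: le_trans (@exp_bound R K C lam (N n x) m n (ltW K0) C0 lam0 (Nge0 n x) nm).
  apply: lerD => //; apply: le_trans g1 _; apply: ler_wpM2l => //.
  by apply: le_trans (hC _) _; apply: ler_wpM2l.
- rewrite ident2 //.
  case: (hN n) => _ _ _ hT; apply: le_trans (hT _ _) _; rewrite Nopp.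
  have [g1 _ _ _] := hb n 0 (P0' *m (cocycle A 0 m *m ((1%:M - P m) *m x))) (leq0n n).
  have [_ g2 _ _] := hb m 0 x (leq0n m).
  rewrite subn0 in g1; rewrite subn0 in g2.
  apply: le_trans (@exp_bound R K C lam (N m x) m n (ltW K0) C0 lam0 (Nge0 m x) nm).
  apply: lerD => //.
  have -> : K * expR (- (lam * m%:R)) * (C * (K * expR (- (lam * n%:R)) * N m x))
     = K * expR (- (lam * n%:R)) * (C * (K * expR (- (lam * m%:R)) * N m x)).
    by ring.
  apply: le_trans g1 _; apply: ler_wpM2l => //.
  by apply: le_trans (hC _) _; apply: ler_wpM2l.
- by apply: le_trans h3 _; apply: KK.
- by apply: le_trans h4 _; apply: KK.
Qed.

End Main.

Theorem corollary7p1 (R : realType) (d : nat) (A : nat -> 'M[R]_d)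
    (N : nat -> 'cV[R]_d -> R) (P : nat -> 'M[R]_d)
    (Y : 'cV[R]_d -> Prop) (P0' : 'M[R]_d) :
  (forall n, A n \in unitmx) ->
  (forall n, is_norm (N n)) ->
  strong_exp_dichotomy A N P ->
  is_subspace Y ->
  direct_sum_im (P 0%N) Y ->
  proj_onto_along P0' (P 0%N) Y ->
  strong_exp_dichotomy A N
    (fun n => cocycle A n 0 *m P0' *m cocycle A 0 n).
Proof.
move=> Au hN [Pid [Pinv [K [a [lam [K0 lam0 lama hb]]]]]] hY [hdec _] hP'.
exact: (@final R d A N P Y P0' Au Pid Pinv hY hdec hP' hN K a lam K0 lam0 lama hb).
Qed.
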